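(* Let $(\Sigma,E)$ be an algebraic theory and $(\Sigma^{\mathrm{s}},E^{\mathrm{s}})$ the associated theory. For all $\Sigma$-terms $t(v_1,\dots,v_n),s(v_1,\dots,v_n)$ over $\mathrm{Var}$: if $E\vdash t(v_1,\dots,v_n)=s(v_1,\dots,v_n)$, then $E^{\mathrm{s}}\vdash t(\mathsf{a}v_1,\dots,\mathsf{a}v_n)=s(\mathsf{a}v_1,\dots,\mathsf{a}v_n)$.
   Context: $\mathrm{Var}=\{v_1,v_2,\dots\}$ is a fixed set of variables; $E\vdash s=t$ means the equation is derivable from $E$ in equational logic (axioms, reflexivity, symmetry, transitivity, congruence, substitution). Given $(\Sigma,E)$, the theory $(\Sigma^{\mathrm{s}},E^{\mathrm{s}})$ has signature $\Sigma^{\mathrm{s}}=\Sigma\uplus\{\mathsf{a}:1\}$ and equations $E^{\mathrm{s}}$ consisting of: $\mathsf{a}\mathsf{a}v_1=\mathsf{a}v_1$; $\mathsf{a}(\mathsf{op}(v_1,\dots,v_n))=\mathsf{op}(v_1,\dots,v_n)$ and $\mathsf{op}(\mathsf{a}v_1,\dots,\mathsf{a}v_n)=\mathsf{op}(v_1,\dots,v_n)$ for every $(\mathsf{op}:n)\in\Sigma$; and $t(\mathsf{a}v_1,\dots,\mathsf{a}v_n)=s(\mathsf{a}v_1,\dots,\mathsf{a}v_n)$ for every equation $t(v_1,\dots,v_n)=s(v_1,\dots,v_n)$ in $E$. *)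

(* Defs.v *)
From mathcomp Require Import all_boot.
Set Implicit Arguments. Unset Strict Implicit. Unset Printing Implicit Defensive.

Record signature := Signature { op_sym :> Type ; arity : op_sym -> nat }.

(* Terms over Var = {v_1, v_2, ...}; variable v_(k+1) is [tvar k]. *)
Inductive term (S : signature) : Type :=
| tvar : nat -> term S
| top : forall o : S, ('I_(arity o) -> term S) -> term S.
Arguments tvar {S} _.
Arguments top {S} o _.

Fixpoint subst (S : signature) (sigma : nat -> term S) (t : term S) : term S :=
  match t with
  | tvar k => sigma k
  | top o args => top o (fun i => subst sigma (args i))
  end.

Definition equations (S : signature) := term S -> term S -> Prop.

Inductive derivable (S : signature) (E : equations S) : term S -> term S -> Prop :=
| d_ax : forall s t, E s t -> derivable E s t
| d_refl : forall t, derivable E t t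
| d_sym : forall s t, derivable E s t -> derivable E t s
| d_trans : forall s t u, derivable E s t -> derivable E t u -> derivable E s u
| d_cong : forall (o : S) (a b : 'I_(arity o) -> term S),
    (forall i, derivable E (a i) (b i)) -> derivable E (top o a) (top o b)
| d_subst : forall (sigma : nat -> term S) s t,
    derivable E s t -> derivable E (subst sigma s) (subst sigma t).

(* The extended signature Sigma^s = Sigma + {a : 1}; [None] is the symbol a. *)
Definition sig_s (S : signature) : signature :=
  @Signature (option S) (fun o => match o with None => 1 | Some o' => arity o' end).

Definition aop (S : signature) (t : term (sig_s S)) : term (sig_s S) :=
  @top (sig_s S) None (fun _ => t).

Fixpoint embed (S : signature) (t : term S) : term (sig_s S) :=
  match t with
  | tvar k => tvar k
  | top o args => @top (sig_s S) (Some o) (fun i => embed (args i))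
  end.

(* The substitution v_i |-> a v_i, i.e. t(v_1..v_n) |-> t(a v_1, .., a v_n). *)
Definition a_vars (S : signature) : nat -> term (sig_s S) :=
  fun k => aop (tvar k).

Definition op_generic (S : signature) (o : S) : term (sig_s S) :=
  @top (sig_s S) (Some o) (fun i => tvar (nat_of_ord i)).

Inductive eqs_s (S : signature) (E : equations S) : equations (sig_s S) :=
| es_aa : eqs_s E (aop (aop (tvar 0))) (aop (tvar 0))
| es_a_op : forall o : S, eqs_s E (aop (op_generic o)) (op_generic o)
| es_op_a : forall o : S, eqs_s E (subst (@a_vars S) (op_generic o)) (op_generic o)
| es_E : forall t s, E t s ->
    eqs_s E (subst (@a_vars S) (embed t)) (subst (@a_vars S) (embed s)).

(* Main.v *)
Require Import Defs.
From mathcomp Require Import all_boot.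
Set Implicit Arguments. Unset Strict Implicit.

Definition Tr (S : signature) (t : term S) : term (sig_s S) :=
  subst (@a_vars S) (embed t).

Definition rho_of (S : signature) (n : nat) (f : 'I_n -> term (sig_s S)) (k : nat)
  : term (sig_s S) :=
  match (insub k : option 'I_n) with Some i => f i | None => tvar 0 end.

Lemma rho_ofE (S : signature) n (f : 'I_n -> term (sig_s S)) (i : 'I_n) :
  rho_of f (nat_of_ord i) = f i.
Proof. by rewrite /rho_of valK. Qed.

Lemma aT (S : signature) (E : equations S) (u : term S) :
  derivable (eqs_s E) (aop (Tr u)) (Tr u).
Proof.
case: u => [k|o args].
  exact: (@d_subst _ _ (fun _ => tvar k) _ _ (d_ax (es_aa E))).
set f := fun i : 'I_(arity o) => Tr (args i).
have H : derivable (eqs_s E) (subst (rho_of f) (op_generic o)) (Tr (top o args)).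
  change (derivable (eqs_s E) (@top (sig_s S) (Some o) (fun i => rho_of f (nat_of_ord i)))
     (@top (sig_s S) (Some o) f)).
  apply: d_cong => i.
  rewrite (rho_ofE f i). exact: d_refl.
apply: (d_trans _ H).
apply: d_trans (@d_subst _ _ (rho_of f) _ _ (d_ax (es_a_op E o))).
change (derivable (eqs_s E) (aop (Tr (top o args))) (aop (subst (rho_of f) (op_generic o)))).
rewrite /aop; apply: d_cong => _; exact: (d_sym H).
Qed.

Lemma substT (S : signature) (E : equations S) (sigma : nat -> term S) (r : term S) :
  derivable (eqs_s E) (subst (fun k => Tr (sigma k)) (Tr r)) (Tr (subst sigma r)).
Proof.
elim: r => [k|o args IH].
  exact: aT.
change (derivable (eqs_s E) (@top (sig_s S) (Some o) (fun i => subst (fun k => Tr (sigma k)) (Tr (args i))))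
  (@top (sig_s S) (Some o) (fun i => Tr (subst sigma (args i))))).
apply: d_cong => i; exact: IH.
Qed.

Theorem lemma7 (S : signature) (E : equations S) (t s : term S) :
  derivable E t s ->
  derivable (eqs_s E) (subst (@a_vars S) (embed t)) (subst (@a_vars S) (embed s)).
Proof.
elim => {t s}.
- move=> s t H; exact: d_ax (es_E H).
- move=> t; exact: d_refl.
- move=> s t _ IH; exact: d_sym.
- move=> s t u _ IH1 _ IH2; exact: d_trans IH1 IH2.
- move=> o a b _ IH.
  change (derivable (eqs_s E) (@top (sig_s S) (Some o) (fun i => Tr (a i)))
    (@top (sig_s S) (Some o) (fun i => Tr (b i)))).
  apply: d_cong => i; exact: IH.
- move=> sigma s t _ IH.
  apply: d_trans (substT E sigma t).
  apply: d_trans (d_sym (substT E sigma s)) _.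
  exact: d_subst IH.
Qed.
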